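(* Let $T\in(0,\infty)$ and let $\big(\Omega,\mathscr{F},(\mathscr{F}_t)_{t\in[0,T]},\mathbf{P}\big)$ be a complete filtered probability space with $\mathscr{F}_T=\mathscr{F}$, whose filtration satisfies the usual conditions. Let $S$ be an adapted $d$-dimensional process with continuous paths and values in $(0,\infty)^d$. If $S$ is sticky, then for every stopping time $\tau\in[0,T]$ and every $\mathscr{F}_\tau$-measurable random variable $\eta\ge 0$, $$\mathbf{P}[S^\star_\tau<\eta\mid\mathscr{F}_\tau]>0\quad\text{almost surely on }\{\eta>0\},$$ i.e. $\mathbf{P}\big[\{\mathbf{P}[S^\star_\tau<\eta\mid\mathscr{F}_\tau]>0\}\cap\{\eta>0\}\big]=\mathbf{P}[\eta>0]$.
   Context: For $x\in\mathbb{R}^d$ let $\|x\|=\max(|x_1|,\ldots,|x_d|)$. For a stopping time $\tau\in[0,T]$ write $S^\star_\tau=\sup_{u\in[\tau,T]}\|S_u-S_\tau\|$. The process $S$ is called sticky if for every deterministic $t\in[0,T)$ and every $\delta>0$, $\mathbf{P}[S^\star_t<\delta\mid\mathscr{F}_t]>0$ almost surely. *)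

(* Defs.v *)
From HB Require Import structures.
From mathcomp Require Import all_boot all_order all_algebra.
From mathcomp Require Import all_classical all_reals all_analysis.
Set Implicit Arguments. Unset Strict Implicit. Unset Printing Implicit Defensive.
Import Order.TTheory GRing.Theory Num.Theory.
Import numFieldNormedType.Exports.
Local Open Scope classical_set_scope.
Local Open Scope ring_scope.

Section Defs.
Context {dsp : measure_display} {Omega : measurableType dsp} {R : realType}.

Definition maxnorm (d : nat) (x : 'I_d -> R) : R := \big[Num.max/0]_(i < d) `|x i|.

Definition Gmeasurable (G : set (set Omega)) (f : Omega -> R) : Prop :=
  forall B : set R, measurable B -> G (f @^-1` B).

Definition is_filtration (T : R) (F : R -> set (set Omega)) : Prop :=
  [/\ (forall t, 0 <= t <= T -> sigma_algebra setT (F t) /\ F t `<=` measurable),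
      (forall s t, 0 <= s -> s <= t -> t <= T -> F s `<=` F t) &
      F T = measurable].

Definition complete_space (P : probability Omega R) : Prop :=
  forall N, measurable N -> P N = 0%E -> forall A, A `<=` N -> measurable A.

Definition usual_conditions (P : probability Omega R) (T : R)
    (F : R -> set (set Omega)) : Prop :=
  (forall N, measurable N -> P N = 0%E -> F 0 N) /\
  (forall t A, 0 <= t -> t < T -> (forall s, t < s -> s <= T -> F s A) -> F t A).

Definition stopping_time (T : R) (F : R -> set (set Omega)) (tau : Omega -> R) : Prop :=
  (forall w, 0 <= tau w <= T) /\
  (forall t, 0 <= t <= T -> F t [set w | tau w <= t]).

Definition F_at (T : R) (F : R -> set (set Omega)) (tau : Omega -> R) : set (set Omega) :=
  [set A | measurable A /\ forall t, 0 <= t <= T -> F t (A `&` [set w | tau w <= t])].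

Definition Sstar (d : nat) (T : R) (S : R -> Omega -> 'I_d -> R) (tau : Omega -> R)
    (w : Omega) : R :=
  sup [set maxnorm (fun i => S u w i - S (tau w) w i) | u in `[tau w, T]].

Definition cond_prob_version (P : probability Omega R) (G : set (set Omega))
    (A : set Omega) (Y : Omega -> R) : Prop :=
  [/\ measurable A, Gmeasurable G Y, P.-integrable setT (EFin \o Y) &
      forall B, G B -> (\int[P]_(x in B) (Y x)%:E = P (A `&` B))%E].

Definition sticky (P : probability Omega R) (d : nat) (T : R)
    (F : R -> set (set Omega)) (S : R -> Omega -> 'I_d -> R) : Prop :=
  forall t delta, 0 <= t -> t < T -> 0 < delta ->
  forall Y, cond_prob_version P (F t) [set w | Sstar T S (fun _ => t) w < delta] Y ->
  {ae P, forall w, 0 < Y w}.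

End Defs.

(* Main.v *)
Require Import Defs.
From HB Require Import structures.
From mathcomp Require Import all_boot all_order all_algebra.
From mathcomp Require Import all_classical all_reals all_analysis.
From mathcomp Require Import measurable_realfun.
From mathcomp Require Import ring lra.
Import Order.TTheory GRing.Theory Num.Theory.
Import numFieldNormedType.Exports.
Local Open Scope classical_set_scope.
Local Open Scope ring_scope.
Section cpv.
Context d (Omega : measurableType d) (R : realType) (P : probability Omega R)
  (G : set (set Omega)).
Hypotheses (sG : sigma_algebra setT G) (GM : G `<=` measurable).

Definition OG := g_sigma_algebraType G.
Definition phiG : Omega -> OG := fun x => x.

Lemma mOG (B : set OG) : measurable B -> G B.
Proof. by rewrite measurable_g_measurableTypeE. Qed.

Lemma mphiG : measurable_fun [set: Omega] phiG.
Proof. by move=> _ B /mOG /GM; rewrite setTI. Qed.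

Definition PG := pushforward P phiG.

Let PG0 : PG set0 = 0%E. Proof. by rewrite /PG /pushforward preimage_set0 measure0. Qed.
Let PG_ge0 (A : set OG) : (0 <= PG A)%E.
Proof. by rewrite /PG /pushforward. Qed.
Let PG_sa : semi_sigma_additive PG.
Proof.
move=> F mF tF mUF; rewrite /PG /pushforward preimage_bigcup.
apply: measure_semi_sigma_additive.
- by move=> n; rewrite -[X in measurable X]setTI; exact: mphiG.
- apply/trivIsetP => /= i j _ _ ij; rewrite -preimage_setI.
  by move/trivIsetP : tF => /(_ _ _ _ _ ij) ->//; rewrite preimage_set0.
- by rewrite -preimage_bigcup -[X in measurable X]setTI; exact: mphiG.
Qed.
HB.instance Definition _ := isMeasure.Build _ _ _ PG PG0 PG_ge0 PG_sa.
Let PG_fin : fin_num_fun PG.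
Proof. by move=> U mU; rewrite /PG /pushforward fin_num_measure//; apply: GM; exact: mOG. Qed.
HB.instance Definition _ := @Measure_isFinite.Build _ _ _ PG PG_fin.


Section nu.
Variables (A : set Omega) (mA : measurable A).
Definition nuA := pushforward (mrestr P mA) phiG.
Let nu0 : nuA set0 = 0%E. Proof. by rewrite /nuA /pushforward /mrestr preimage_set0 set0I measure0. Qed.
Let nu_ge0 (B : set OG) : (0 <= nuA B)%E.
Proof. by rewrite /nuA /pushforward /mrestr. Qed.
Let nu_sa : semi_sigma_additive nuA.
Proof.
move=> F mF tF mUF; rewrite /nuA /pushforward preimage_bigcup.
apply: measure_semi_sigma_additive.
- by move=> n; rewrite -[X in measurable X]setTI; exact: mphiG.
- apply/trivIsetP => /= i j _ _ ij; rewrite -preimage_setI.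
  by move/trivIsetP : tF => /(_ _ _ _ _ ij) ->//; rewrite preimage_set0.
- by rewrite -preimage_bigcup -[X in measurable X]setTI; exact: mphiG.
Qed.
HB.instance Definition _ := isMeasure.Build _ _ _ nuA nu0 nu_ge0 nu_sa.
Let nu_fin : fin_num_fun nuA.
Proof.
move=> U mU; rewrite /nuA /pushforward /mrestr fin_num_measure//.
apply: measurableI => //; apply: GM; exact: mOG.
Qed.
HB.instance Definition _ := @Measure_isFinite.Build _ _ _ nuA nu_fin.

Lemma nu_dom : charge_of_finite_measure nuA `<< PG.
Proof.
move=> N PN B mB BN; have := PN B mB BN; rewrite /PG /pushforward /= => PB0.
rewrite /charge_of_finite_measure /nuA /pushforward /mrestr.
have mB' : measurable (phiG @^-1` B) by apply: GM; exact: mOG.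
have mBA : measurable (phiG @^-1` B `&` A) by exact: measurableI.
apply/eqP; rewrite eq_le measure_ge0 // andbT -PB0; apply: le_measure; rewrite ?inE //.
Qed.

Lemma cpv_exists : exists Y, cond_prob_version P G A Y.
Proof.
set f := Radon_Nikodym (charge_of_finite_measure nuA) PG.
have ffin x : f x \is a fin_num by apply: Radon_Nikodym_fin_num; exact: nu_dom.
have fint : PG.-integrable setT f by apply: Radon_Nikodym_integrable; exact: nu_dom.
have mf : measurable_fun [set: OG] f.
  exact: (measurable_int PG).
have EY : EFin \o (fun x => fine (f x)) = f.
  by apply/funext => x /=; rewrite fineK.
exists (fun x => fine (f x)); split => //.
- move=> B mB.
  have := (measurableT_comp (fine_measurable measurableT) mf) measurableT B mB.
  by rewrite setTI => /mOG.
- rewrite EY; apply/integrableP; split.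
    exact: (measurableT_comp mf mphiG).
  move/integrableP: fint => [_]; rewrite ge0_integral_pushforward //.
  all: try exact: mphiG.
  by apply: measurableT_comp; [exact: abse_measurable|exact: mf].
- move=> B GB.
  have EY' : (fun x => (fine (f x))%:E) = f by exact: EY.
  rewrite EY'.
  have mB : measurable (B : set OG) by rewrite measurable_g_measurableTypeE.
  have := Radon_Nikodym_integral nu_dom mB.
  rewrite /= /charge_of_finite_measure /nuA /pushforward /mrestr => h.
  transitivity (\int[PG]_(x in (B : set OG)) f x)%E; last by rewrite -h setIC.
  rewrite integral_pushforward //.
  - exact: mphiG.
  - apply: (integrableS measurableT) => //; first exact: GM.
    apply/integrableP; split; first exact: (measurableT_comp mf mphiG).
    move/integrableP: fint => [_]; rewrite ge0_integral_pushforward //.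
    all: try exact: mphiG.
    by apply: measurableT_comp; [exact: abse_measurable|exact: mf].
Qed.
End nu.
End cpv.

Section pos.
Context d (Omega : measurableType d) (R : realType) (P : probability Omega R).

Lemma ae_negl (Q : Omega -> Prop) : {ae P, forall w, Q w} -> P.-negligible (~` [set w | Q w]).
Proof. by []. Qed.

Lemma cpv_pos (G : set (set Omega)) A Y B :
  G `<=` measurable -> cond_prob_version P G A Y -> {ae P, forall w, 0 < Y w} -> G B ->
  P (A `&` B) = 0%E -> P B = 0%E.
Proof.
move=> GM [mA _ iY hY] Ypos GB PAB.
have mB : measurable B by exact: GM.
have mY : measurable_fun setT (EFin \o Y) := measurable_int _ iY.
have mYB : measurable_fun B (EFin \o Y) by exact: measurable_funS mY.
have h1 : (\int[P]_(x in B) `|(EFin \o Y) x| = 0)%E.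
  rewrite -PAB -hY //; apply: ae_eq_integral => //.
  - by apply: measurableT_comp; [exact: abse_measurable|].
  - by apply: filterS Ypos => x Yx _ /=; rewrite ger0_norm // ltW.
have := (ae_eq_integral_abs P mB mYB).1 h1.
move=> /ae_negl N1; have N2 : P.-negligible (~` [set w | 0 < Y w]) := Ypos.
apply/(negligibleP _ mB); apply: negligibleS (negligibleU N1 N2).
move=> x Bx; have [Yx|Yx] := ltP 0 (Y x).
- by left => /= /(_ Bx) [] /eqP; rewrite gt_eqF.
- by right => /=; rewrite ltNge Yx.
Qed.
End pos.
Section an.
Context {R : realType}.
Lemma cont_ed (f : R -> R) a b x : {within `[a,b], continuous f} -> a <= x <= b ->
  forall e, 0 < e -> exists2 h, 0 < h & forall u, a <= u <= b -> `|u - x| < h -> `|f u - f x| < e.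
Proof.
move=> cf xab e e0.
have Ax : [set` `[a, b]] x by rewrite /= in_itv /=.
have := (@subspace_continuousP _ [set` `[a, b]] _ f).1 cf x Ax.
move=> /cvgrPdist_lt /(_ e e0).
rewrite near_withinE => /nbhs_ballP [h h0 H].
exists h => // u uab ux; rewrite distrC; apply: H.
  by rewrite /ball /= distrC.
by rewrite /= in_itv /=.
Qed.

Lemma andP_intro (a b : bool) : a -> b -> a && b.
Proof. by move=> -> ->. Qed.

Definition grid (a b : R) (p q : nat) := a + (b - a) * p%:R / q.+1%:R.

Definition cont_on (h : R -> R) a b := forall x, a <= x <= b -> forall e, 0 < e ->
  exists2 k, 0 < k & forall u, a <= u <= b -> `|u - x| < k -> `|h u - h x| < e.

Lemma dense_bound (h : R -> R) a b c : a < b -> cont_on h a b ->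
  (forall p q, grid a b p q <= b -> h (grid a b p q) <= c) ->
  forall x, a <= x <= b -> h x <= c.
Proof.
move=> ab hc hg x xab; rewrite leNgt; apply/negP => cx.
have hxc : 0 < h x - c by rewrite subr_gt0.
have [k k0 Hk] := hc x xab (h x - c) hxc.
have ba0 : 0 < b - a by rewrite subr_gt0.
set q := Num.truncn ((b - a) / k).
have q1 : (b - a) / k < q.+1%:R by exact: truncnS_gt.
have q0 : (0 : R) < q.+1%:R by rewrite ltr0n.
have qk : (b - a) / q.+1%:R < k.
  by rewrite ltr_pdivrMr // mulrC -ltr_pdivrMr.
have xa0 : 0 <= (x - a) * q.+1%:R / (b - a).
  case/andP: xab => ax _; apply: divr_ge0; last exact: ltW.
  by apply: mulr_ge0; [rewrite subr_ge0|exact: ltW].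
set p := Num.truncn ((x - a) * q.+1%:R / (b - a)).
have /andP[p1 p2] := truncn_itv xa0.
set z := (b - a) / q.+1%:R.
have z0 : 0 < z by apply: divr_gt0.
have ex : x - a = ((x - a) * q.+1%:R / (b - a)) * z.
  by rewrite /z; field; rewrite ?gt_eqF // lt0r_neq0.
have eg : grid a b p q - a = p%:R * z.
  by rewrite /grid /z addrAC subrr add0r mulrCA mulrA.
set y := (x - a) * q.+1%:R / (b - a) in ex p1 p2.
have gx : grid a b p q <= x.
  have : p%:R * z <= y * z by rewrite ler_pM2r.
  rewrite -eg -ex; lra.
have xg : x - grid a b p q < z.
  have : (y - p%:R) * z < 1 * z.
    by rewrite ltr_pM2r //; move: p2; rewrite -natr1; lra.
  rewrite mul1r mulrBl -eg -ex; lra.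
have ga : a <= grid a b p q by rewrite -subr_ge0 eg; apply: mulr_ge0 => //; exact: ltW.
have gb : grid a b p q <= b by case/andP: xab => _ xb; exact: le_trans xb.
have H2 := hg p q gb.
have gk : `|grid a b p q - x| < k.
  rewrite distrC ger0_norm ?subr_ge0 //; exact: lt_trans xg qk.
have gab : a <= grid a b p q <= b by rewrite ga gb.
have H1 := Hk (grid a b p q) gab gk.
move: H1; rewrite ltr_norml => /andP[H1 _]; lra.
Qed.


Lemma grid_ge a b p q : a <= b -> a <= grid a b p q.
Proof.
move=> ab; rewrite /grid lerDl; apply: divr_ge0 => //.
by apply: mulr_ge0 => //; rewrite subr_ge0.
Qed.

Lemma cont_on_absB (f : R -> R) C a b : cont_on f a b ->
  cont_on (fun u => `|f u - C|) a b.
Proof.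
move=> cf x xab e e0; have [k k0 Hk] := cf x xab e e0; exists k => // u uab ux.
apply: le_lt_trans (Hk u uab ux); have -> : f u - f x = (f u - C) - (f x - C) by rewrite opprB addrA subrK.
exact: ler_dist_dist.
Qed.

Lemma cont_on_absB' (f : R -> R) C a b : cont_on f a b ->
  cont_on (fun u => `|C - f u|) a b.
Proof.
move=> cf; have := @cont_on_absB f C a b cf.
by move=> H x xab e e0; have [k k0 Hk] := H x xab e e0; exists k => // u; rewrite !(distrC C); exact: Hk.
Qed.

Lemma meas_le d0 (M : measurableType d0) (f : M -> R) c :
  measurable_fun setT f -> measurable [set w | f w <= c].
Proof.
move=> mf; have := mf measurableT `]-oo, c]%classic (measurable_itv _).
by rewrite setTI; congr measurable; apply/seteqP; split => w /=; rewrite in_itv.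
Qed.

Lemma meas_absB d0 (M : measurableType d0) (f g : M -> R) c :
  measurable_fun setT f -> measurable_fun setT g -> measurable [set w | `|f w - g w| <= c].
Proof.
move=> mf mg; apply: (@meas_le _ _ (fun w => `|f w - g w|)).
by apply: measurableT_comp; [exact: normr_measurable|exact: measurable_funB].
Qed.

Lemma meas_Q d0 (M : measurableType d0) dd (X : R -> M -> 'I_dd -> R) a b v c :
  a < b ->
  (forall p q i, grid a b p q <= b -> measurable_fun setT (fun w => X (grid a b p q) w i)) ->
  (forall i, measurable_fun setT (fun w => X v w i)) ->
  (forall w i, cont_on (fun u => X u w i) a b) ->
  measurable [set w | forall u i, a <= u <= b -> `|X u w i - X v w i| <= c].
Proof.
move=> ab mX mv cX.
have -> : [set w | forall u i, a <= u <= b -> `|X u w i - X v w i| <= c] =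
  \bigcap_(i in setT) \bigcap_p \bigcap_q
    (if grid a b p q <= b then [set w | `|X (grid a b p q) w i - X v w i| <= c] else setT).
  apply/seteqP; split => w /=.
    move=> H i _ p _ q _; case: ifP => // gb; apply: H.
    by rewrite gb grid_ge // ltW.
  move=> H u i uab.
  apply: (@dense_bound (fun u => `|X u w i - X v w i|) a b c ab) => //.
    exact: cont_on_absB.
  by move=> p q gb; have := H i I p I q I; rewrite gb.
apply: fin_bigcap_measurable; first exact: finite_finset.
move=> i _; apply: bigcapT_measurable => p; apply: bigcapT_measurable => q.
case: ifP => gb //; apply: meas_absB; [exact: mX|exact: mv].
Qed.

Lemma meas_osc d0 (M : measurableType d0) dd (X : R -> M -> 'I_dd -> R) a b c :
  a < b ->
  (forall p q i, grid a b p q <= b -> measurable_fun setT (fun w => X (grid a b p q) w i)) ->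
  (forall w i, cont_on (fun u => X u w i) a b) ->
  measurable [set w | forall u v i, a <= u <= b -> a <= v <= b -> `|X u w i - X v w i| <= c].
Proof.
move=> ab mX cX.
have -> : [set w | forall u v i, a <= u <= b -> a <= v <= b -> `|X u w i - X v w i| <= c] =
  \bigcap_p \bigcap_q
    (if grid a b p q <= b then [set w | forall u i, a <= u <= b -> `|X u w i - X (grid a b p q) w i| <= c] else setT).
  apply/seteqP; split => w /=.
    move=> H p _ q _; case: ifP => // gb u i uab; apply: H => //.
    by rewrite gb grid_ge // ltW.
  move=> H u v i uab vab.
  apply: (@dense_bound (fun v => `|X u w i - X v w i|) a b c ab) => //.
    exact: cont_on_absB'.
  by move=> p q gb; have := H p I q I; rewrite gb; apply.
apply: bigcapT_measurable => p; apply: bigcapT_measurable => q.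
case: ifP => gb //; apply: meas_Q => // i; exact: mX.
Qed.

Lemma cont_ed_all dd (f : 'I_dd -> R -> R) a b x :
  (forall i, {within `[a,b], continuous f i}) -> a <= x <= b ->
  forall e, 0 < e -> exists2 k, 0 < k &
    forall u, a <= u <= b -> `|u - x| < k -> forall i, `|f i u - f i x| < e.
Proof.
move=> cf xab e e0.
have Ax : [set` `[a, b]] x by rewrite /= in_itv /=.
have H i : \forall u \near nbhs x, [set` `[a, b]] u -> `|f i x - f i u| < e.
  have := (@subspace_continuousP _ [set` `[a, b]] _ (f i)).1 (cf i) x Ax.
  by move=> /cvgrPdist_lt /(_ e e0); rewrite near_withinE.
have H2 : \forall u \near nbhs x, forall i, [set` `[a, b]] u -> `|f i x - f i u| < e.
  exact: filter_forall.
move: H2 => /nbhs_ballP [k k0 Hk].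
exists k => // u uab ux i; rewrite distrC; apply: Hk.
  by rewrite /ball /= distrC.
by rewrite /= in_itv /=.
Qed.

Lemma cont_on_of (f : R -> R) a b : {within `[a,b], continuous f} -> cont_on f a b.
Proof.
move=> cf x xab e e0.
have [k k0 Hk] := @cont_ed_all 1 (fun _ => f) a b x (fun _ => cf) xab e e0.
by exists k => // u uab ux; exact: (Hk u uab ux ord0).
Qed.

Lemma cont_on_sub (f : R -> R) a b a' b' : a <= a' -> b' <= b -> cont_on f a b -> cont_on f a' b'.
Proof.
move=> aa bb cf x xab e e0.
have xab' : a <= x <= b.
  by case/andP: xab => h1 h2; rewrite (le_trans aa h1) (le_trans h2 bb).
have [k k0 Hk] := cf x xab' e e0; exists k => // u uab ux; apply: Hk => //.
by case/andP: uab => h1 h2; rewrite (le_trans aa h1) (le_trans h2 bb).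
Qed.

Lemma maxnorm_ge0 dd (x : 'I_dd -> R) : 0 <= maxnorm x.
Proof. by rewrite /maxnorm; elim/big_ind: _ => // u v hu hv; rewrite le_max hu. Qed.

Lemma le_maxnorm dd (x : 'I_dd -> R) i : `|x i| <= maxnorm x.
Proof.
rewrite /maxnorm (bigD1 i) //= le_max lexx //.
Qed.

Lemma maxnorm_le dd (x : 'I_dd -> R) c : 0 <= c -> (forall i, `|x i| <= c) -> maxnorm x <= c.
Proof.
move=> c0 H; rewrite /maxnorm; elim/big_ind: _ => // u v hu hv.
by rewrite ge_max hu.
Qed.
End an.
Section Main.
Context dsp (Omega : measurableType dsp) (R : realType)
  (P : probability Omega R) (T : R) (F : R -> set (set Omega))
  (d : nat) (S : R -> Omega -> 'I_d -> R).
Hypotheses (hT : 0 < T) (hF : is_filtration T F)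
  (hS : forall t i, 0 <= t <= T -> Gmeasurable (F t) (fun w => S t w i))
  (hC : forall w i, {within `[0, T], continuous (fun t => S t w i)}).
Set Implicit Arguments. Unset Strict Implicit.

Lemma Fsig t : 0 <= t <= T -> sigma_algebra setT (F t).
Proof. by case: hF => H _ _ /H []. Qed.
Lemma FM t : 0 <= t <= T -> F t `<=` measurable.
Proof. by case: hF => H _ _ /H []. Qed.
Lemma Fmono s t : 0 <= s -> s <= t -> t <= T -> F s `<=` F t.
Proof. by case: hF => _ H _; exact: H. Qed.

Lemma FmeasE t X : 0 <= t <= T -> F t X <-> @measurable _ (g_sigma_algebraType (F t)) X.
Proof. by move=> ht; rewrite measurable_g_measurableTypeE //; exact: Fsig. Qed.

Lemma FI t X Y : 0 <= t <= T -> F t X -> F t Y -> F t (X `&` Y).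
Proof. by move=> ht /(FmeasE _ ht) hX /(FmeasE _ ht) hY; apply/(FmeasE _ ht); exact: measurableI. Qed.
Lemma FC t X : 0 <= t <= T -> F t X -> F t (~` X).
Proof. by move=> ht /(FmeasE _ ht) hX; apply/(FmeasE _ ht); exact: measurableC. Qed.
Lemma FT t : 0 <= t <= T -> F t setT.
Proof. by move=> ht; apply/(FmeasE _ ht); exact: measurableT. Qed.

Lemma S_meas t i : 0 <= t <= T -> measurable_fun setT (fun w => S t w i).
Proof. by move=> ht _ B mB; rewrite setTI; apply: (FM ht); exact: hS. Qed.

Lemma S_measG t u i : 0 <= u -> u <= t -> t <= T ->
  measurable_fun [set: g_sigma_algebraType (F t)] (fun w => S u w i).
Proof.
move=> u0 ut tT _ B mB; rewrite setTI; apply/(FmeasE _ _).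
  by rewrite (le_trans u0 ut).
by apply: (Fmono u0 ut tT); apply: hS => //; rewrite u0 (le_trans ut tT).
Qed.

Lemma S_cont w i a b : 0 <= a -> b <= T -> cont_on (fun u => S u w i) a b.
Proof. by move=> a0 bT; apply: (cont_on_sub _ _ _ _ _ a0 bT); exact: cont_on_of. Qed.

Lemma S_bnd w : exists M, forall u v, 0 <= u <= T -> 0 <= v <= T ->
  maxnorm (fun i => S u w i - S v w i) <= M.
Proof.
have H i : exists M, 0 <= M /\ forall u, 0 <= u <= T -> `|S u w i| <= M.
  have [c1 c1T H1] := @EVT_max R (fun t => S t w i) 0 T (ltW hT) (hC w i).
  have [c2 c2T H2] := @EVT_min R (fun t => S t w i) 0 T (ltW hT) (hC w i).
  exists (`|S c1 w i| + `|S c2 w i|); split; first by rewrite addr_ge0.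
  move=> u uT; have /H1 h1 : u \in `[0, T] by rewrite in_itv.
  have /H2 h2 : u \in `[0, T] by rewrite in_itv.
  have n1 := lerNnormlW (lexx `|S c2 w i|); have n2 := normr_ge0 (S c1 w i).
  have n3 := ler_norm (S c1 w i); have n4 := normr_ge0 (S c2 w i).
  rewrite ler_norml; apply/andP; split; lra.
have [Mf HM] := boolp.choice H.
exists (2 * \big[Num.max/0]_(i < d) Mf i) => u v uT vT.
have Mge i : Mf i <= \big[Num.max/0]_(i < d) Mf i.
  by rewrite (bigD1 i) //= le_max lexx.
apply: maxnorm_le.
  apply: mulr_ge0 => //; elim/big_ind: _ => //; first by move=> x y hx hy; rewrite le_max hx.
  by move=> k _; exact: (HM k).1.
move=> i; apply: le_trans (ler_normB _ _) _.
rewrite mulr2n mulrDl mul1r; apply: lerD; apply: le_trans (Mge i).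
  by apply: (HM i).2.
by apply: (HM i).2.
Qed.

Lemma Sstar_ub (tau : Omega -> R) w u : 0 <= tau w -> tau w <= u <= T ->
  maxnorm (fun i => S u w i - S (tau w) w i) <= Sstar T S tau w.
Proof.
move=> t0 /andP[tu uT]; rewrite /Sstar.
have [M HM] := S_bnd w.
apply: ub_le_sup; last by exists u => //; rewrite /= in_itv /= tu uT.
exists M => _ [v /= vI <-]; move: vI; rewrite in_itv /= => /andP[tv vT].
by apply: HM; rewrite ?(le_trans t0 tv) ?vT ?t0 ?(le_trans tu uT).
Qed.

Lemma Sstar_le (tau : Omega -> R) w c : tau w <= T ->
  (forall u, tau w <= u <= T -> maxnorm (fun i => S u w i - S (tau w) w i) <= c) ->
  Sstar T S tau w <= c.
Proof.
move=> tT H; rewrite /Sstar; apply: ge_sup.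
  by exists (maxnorm (fun i => S (tau w) w i - S (tau w) w i)), (tau w) => //=; rewrite in_itv /= lexx tT.
by move=> _ [v /= vI <-]; apply: H; move: vI; rewrite in_itv.
Qed.

Lemma meas_Sst t del : 0 <= t -> t < T -> 0 < del ->
  measurable [set w | Sstar T S (fun _ => t) w < del].
Proof.
move=> t0 tT d0.
have -> : [set w | Sstar T S (fun _ => t) w < del] = \bigcup_n
    [set w | forall u i, t <= u <= T -> `|S u w i - S t w i| <= del - (n.+1%:R)^-1].
  apply/seteqP; split => w /=.
    move=> sd; set s := Sstar T S (fun _ => t) w in sd *.
    have ds : 0 < del - s by rewrite subr_gt0.
    exists (Num.truncn ((del - s)^-1)) => // u i tu.
    have h1 := truncnS_gt ((del - s)^-1).
    have h2 : (((Num.truncn ((del - s)^-1)).+1)%:R)^-1 < del - s.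
      by rewrite invf_plt ?posrE ?ltr0n.
    apply: le_trans (le_maxnorm _ (fun i => S u w i - S t w i) i) _.
    have := @Sstar_ub (fun _ => t) w u t0 tu; rewrite -/s => H; apply: le_trans H _; set x := (_.+1%:R)^-1 in h2 *; clearbody s x; lra.
  move=> [n _ H]; set c := del - (n.+1%:R)^-1.
  have c1 : c < del by rewrite /c ltrBlDr ltrDl invr_gt0 ltr0n.
  apply: (@le_lt_trans _ _ (Num.max 0 c)); last by rewrite gt_max d0.
  apply: Sstar_le => [|u tu]; first exact: ltW.
  apply: maxnorm_le; first by rewrite le_max lexx.
  by move=> i; apply: le_trans (H u i tu) _; rewrite le_max lexx orbT.
apply: bigcupT_measurable => n; apply: meas_Q => //.
- move=> p q i gT; apply: S_meas.
  by rewrite gT andbT (le_trans t0) // grid_ge // ltW.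
- by move=> i; apply: S_meas; rewrite t0 ltW.
- by move=> w i; apply: S_cont.
Qed.

Definition hstep (m : nat) := T / m.+1%:R.
Definition tk (m k : nat) := k.+1%:R * hstep m.
Definition lo (m k : nat) := tk m k - 2 * hstep m.
Definition Cosc a b c := [set w | forall u v i, a <= u <= b -> a <= v <= b -> `|S u w i - S v w i| <= c].

Lemma hstep_gt0 m : 0 < hstep m.
Proof. by apply: divr_gt0 => //; rewrite ltr0n. Qed.

Lemma tk_T m : tk m m = T.
Proof. by rewrite /tk /hstep; field; rewrite addrC natr1 pnatr_eq0. Qed.

Lemma tk_le m k : (k <= m)%N -> tk m k <= T.
Proof.
move=> km; rewrite -(tk_T m) /tk ler_pM2r ?hstep_gt0 //.
by rewrite ler_nat.
Qed.

Lemma tk_gt0 m k : 0 < tk m k.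
Proof. by rewrite /tk mulr_gt0 ?ltr0n ?hstep_gt0. Qed.

Lemma F_at_sub tau A t : F_at T F tau A -> 0 <= t <= T -> F t (A `&` [set w | tau w <= t]).
Proof. by case=> _ H /H. Qed.

Lemma stop_F tau s t : stopping_time T F tau -> 0 <= t <= T -> s <= t -> F t [set w | tau w <= s].
Proof.
move=> [t0 st] /andP[h0 tT] stt.
have [s0|s0] := leP 0 s.
  by apply: (Fmono s0 stt tT); apply: st; rewrite s0 (le_trans stt tT).
have -> : [set w | tau w <= s] = set0.
  apply/seteqP; split => w //= tw; have := (t0 w); case/andP => h _.
  by move: (le_lt_trans (le_trans h tw) s0); rewrite ltxx.
by rewrite -setCT; apply: FC; rewrite ?h0 ?tT //; apply: FT; rewrite h0.
Qed.

Hypothesis hst : sticky P T F S.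

Lemma B_negl (tau eta : Omega -> R) (A N : set Omega) m k c :
  stopping_time T F tau -> F_at T F tau A -> Gmeasurable (F_at T F tau) eta ->
  P.-negligible N -> (forall w, A w -> Sstar T S tau w < eta w -> N w) ->
  (k <= m)%N -> 0 < c ->
  P.-negligible [set w | A w /\ 2 * c < eta w /\ lo m k < tau w /\ tau w <= tk m k /\
     Cosc (Num.max 0 (lo m k)) (tk m k) (c / 2) w].
Proof.
move=> htau hA heta hN hAN km c0.
set t := tk m k; set a := Num.max 0 (lo m k).
set B := [set w | _ ].
have h0 := hstep_gt0 m.
have tT : t <= T by exact: tk_le.
have t0 : 0 < t by exact: tk_gt0.
have a0 : 0 <= a by rewrite le_max lexx.
have at_ : a < t by rewrite gt_max t0 /lo /t ltrBlDr ltrDl mulr_gt0.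
have taua w : B w -> a <= tau w <= t.
  move=> [_ [_ [h1 [h2 _]]]]; rewrite h2 andbT ge_max (ltW h1) andbT.
  by case: htau => /(_ w) /andP[].
have claim1 w u : B w -> tau w <= u <= t -> maxnorm (fun i => S u w i - S (tau w) w i) <= c / 2.
  move=> Bw /andP[tu ut]; have /andP[atau taut] := taua w Bw.
  apply: maxnorm_le; first by apply: divr_ge0 => //; exact: ltW.
  move=> i; case: Bw => [_ [_ [_ [_ HC]]]]; apply: HC.
    by rewrite ut (le_trans atau tu).
  by rewrite atau taut.
have [tTe|tTl] := eqVneq t T.
  apply: negligibleS hN => w Bw; apply: hAN; first by case: Bw.
  apply: (@le_lt_trans _ _ (c / 2)).
    apply: Sstar_le; first by rewrite -tTe; case/andP: (taua w Bw).
    by move=> u; rewrite -tTe => hu; exact: claim1.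
  by case: Bw => [_ [h _]]; apply: lt_trans h; lra.
have tTs : t < T by rewrite lt_neqAle tTl tT.
have t0T : 0 <= t <= T by rewrite (ltW t0) tT.
have FB : F t B.
  have e : B = (A `&` [set w | tau w <= t]) `&`
     (((eta @^-1` `]2 * c, +oo[%classic) `&` [set w | tau w <= t]) `&`
      ((~` [set w | tau w <= lo m k]) `&` Cosc a t (c / 2))).
    apply/seteqP; split => w /=.
      move=> [Aw [ew [lw [tw Cw]]]]; split; first by [].
      by split; [split=> //; rewrite in_itv /= ew|split=> //; apply/negP; rewrite -ltNge].
    move=> [[Aw tw] [[ew _] [lw Cw]]]; move: ew; rewrite in_itv /= andbT => ew.
    by split=> //; split=> //; split=> //; rewrite ltNge; apply/negP.
  rewrite e; apply: FI => //; first exact: F_at_sub.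
  apply: FI => //.
    by apply: F_at_sub => //; apply: heta; exact: measurable_itv.
  apply: FI => //; first by apply: FC => //; apply: stop_F => //; rewrite /lo -/t; lra.
  apply/FmeasE => //; apply: meas_osc => //.
  - move=> p q i gb; apply: S_measG => //.
    + by apply: le_trans (grid_ge _ _ _ _ (ltW at_)).
  - by move=> w i; apply: S_cont.
set ET := [set w | Sstar T S (fun _ => t) w < c].
have mET : measurable ET by apply: meas_Sst => //; exact: ltW.
have [Yt hYt] := @cpv_exists _ _ _ P (F t) (Fsig t0T) (FM t0T) ET mET.
have Ypos := hst (ltW t0) tTs c0 hYt.
have PB : P B = 0%E.
  apply: (@cpv_pos _ _ _ P (F t) ET Yt B (FM t0T) hYt Ypos FB).
  case: hN => N' [mN' PN' NN'].
  apply: (subset_measure0 _ _ _ PN') => //.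
    by apply: measurableI => //; exact: (FM t0T).
  move=> w [ETw Bw]; apply: NN'; apply: hAN; first by case: Bw.
  apply: (@le_lt_trans _ _ (c + c / 2)); last first.
    by case: Bw => [_ [h _]]; apply: lt_trans h; lra.
  have /andP[atau taut] := taua w Bw.
  apply: Sstar_le => [|u /andP[tu uT]]; first exact: le_trans taut tT.
  have [ut|tu'] := leP u t.
    by apply: le_trans (claim1 w u Bw _) _; [rewrite tu ut|lra].
  apply: maxnorm_le => [|i]; first by apply: addr_ge0; [exact: ltW|apply: divr_ge0 => //; exact: ltW].
  have e1 : `|S u w i - S t w i| <= c.
    apply: le_trans (le_maxnorm _ (fun i => S u w i - S t w i) i) _.
    apply: le_trans (@Sstar_ub (fun _ => t) w u (ltW t0) _) _; first by rewrite (ltW tu') uT.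
    exact: ltW.
  have e2 : `|S t w i - S (tau w) w i| <= c / 2.
    case: Bw => [_ [_ [_ [_ HC]]]]; apply: HC; first by rewrite lexx ltW.
    by rewrite atau taut.
  have -> : S u w i - S (tau w) w i = (S u w i - S t w i) + (S t w i - S (tau w) w i).
    by rewrite addrA subrK.
  by apply: le_trans (ler_normD _ _) _; exact: lerD.
by exists B; split => //; exact: (FM t0T).
Qed.

Lemma F_atI tau X Z : F_at T F tau X -> F_at T F tau Z -> F_at T F tau (X `&` Z).
Proof.
move=> [mX hX] [mZ hZ]; split; first exact: measurableI.
move=> t ht; have -> : X `&` Z `&` [set w | tau w <= t] =
  (X `&` [set w | tau w <= t]) `&` (Z `&` [set w | tau w <= t]).
  by rewrite setIACA setIid.
exact: FI (hX t ht) (hZ t ht).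
Qed.

Lemma main_lemma (tau eta : Omega -> R) :
    stopping_time T F tau ->
    Gmeasurable (F_at T F tau) eta ->
    (forall w, 0 <= eta w) ->
    forall Y, cond_prob_version P (F_at T F tau) [set w | Sstar T S tau w < eta w] Y ->
    {ae P, forall w, 0 < eta w -> 0 < Y w}.
Proof.
move=> htau heta eta0 Y [mE hYm iY hYint].
set E := [set w | Sstar T S tau w < eta w] in mE hYint *.
set A := [set w | 0 < eta w /\ Y w <= 0].
have FA : F_at T F tau A.
  have -> : A = (eta @^-1` `]0, +oo[%classic) `&` (Y @^-1` `]-oo, 0]%classic).
    by apply/seteqP; split => w /=; rewrite !in_itv /= andbT.
  by apply: F_atI; [apply: heta|apply: hYm]; exact: measurable_itv.
have mA : measurable A by case: FA.
have PN : P (E `&` A) = 0%E.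
  rewrite -hYint //; apply/eqP; rewrite eq_le; apply/andP; split; last first.
    by rewrite hYint //; exact: measure_ge0 (measurableI _ _ mE mA).
  have -> : (\int[P]_(x in A) (Y x)%:E = - \int[P]_(x in A) (- Y x)%:E)%E.
    rewrite -integral_ge0N; last by move=> x [_ Yx]; rewrite lee_fin oppr_ge0.
    by apply: eq_integral => x _; rewrite EFinN oppeK.
  by rewrite oppe_le0; apply: integral_ge0 => x [_ Yx]; rewrite lee_fin oppr_ge0.
have hN : P.-negligible (A `&` E) by exists (A `&` E); split => //; [exact: measurableI|rewrite setIC].
have hAN w : A w -> Sstar T S tau w < eta w -> (A `&` E) w by [].
pose Bs (j m k : nat) := if (k <= m)%N then
  [set w | A w /\ 2 * (j.+1%:R)^-1 < eta w /\ lo m k < tau w /\ tau w <= tk m k /\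
     Cosc (Num.max 0 (lo m k)) (tk m k) ((j.+1%:R)^-1 / 2) w] else set0.
have hB j m k : P.-negligible (Bs j m k).
  rewrite /Bs; case: ifP => km; last exact: negligible_set0.
  by apply: (B_negl htau FA heta hN hAN km); rewrite invr_gt0 ltr0n.
have hA : P.-negligible A.
  apply: negligibleS (negligible_bigcup (fun j => negligible_bigcup (fun m =>
      negligible_bigcup (fun k => hB j m k)))).
  move=> w Aw; case: (Aw) => [ew Yw].
  have t0T : 0 <= tau w <= T by case: htau.
  pose j := Num.truncn (2 / eta w).
  pose c : R := (j.+1%:R)^-1.
  have J0 : (0 : R) < j.+1%:R by rewrite ltr0n.
  have c0 : 0 < c by rewrite invr_gt0.
  have c2 : 2 * c < eta w.
    have := truncnS_gt (2 / eta w); rewrite -/j ltr_pdivrMr // => H.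
    by rewrite ltr_pdivrMr // mulrC.
  have c4 : 0 < c / 4 by rewrite divr_gt0.
  have [kap kap0 Hk] := @cont_ed_all R d (fun i u => S u w i) 0 T (tau w) (fun i => hC w i) t0T (c / 4) c4.
  pose m := Num.truncn (2 * T / kap).
  pose h : R := hstep m.
  have h0 : 0 < h := hstep_gt0 m.
  have hM : m.+1%:R * h = T by exact: tk_T.
  have hm : 2 * h < kap.
    have := truncnS_gt (2 * T / kap); rewrite -/m ltr_pdivrMr // => H.
    by rewrite /h /hstep mulrA ltr_pdivrMr ?ltr0n // [kap * _]mulrC.
  have tauh : 0 <= tau w / h by apply: divr_ge0; [case/andP: t0T|exact: ltW].
  pose r := Num.truncn (tau w / h).
  have /andP[r1 r2] := truncn_itv tauh.
  have r1' : r%:R * h <= tau w by rewrite -ler_pdivlMr.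
  have r2' : tau w < r.+1%:R * h by rewrite -ltr_pdivrMr.
  pose k := minn r m.
  have km : (k <= m)%N by exact: geq_minr.
  have [lok ktk] : lo m k < tau w /\ tau w <= tk m k.
    rewrite /lo /tk -/h; case: (leqP r m) => rm.
      have -> : k = r by apply/minn_idPl.
      move: r1' r2'; rewrite -natr1 => r1' r2'; split; [lra|exact: ltW].
    have -> : k = m by apply/minn_idPr; exact: ltnW.
    have : m.+1%:R * h <= r%:R * h by rewrite ler_pM2r // ler_nat.
    move: hM; case/andP: t0T => _ tT; rewrite -natr1 => hM rh; split; lra.
  exists j => //; exists m => //; exists k => //; rewrite /Bs km.
  split=> //; split=> //; split=> //; split=> //.
  move=> u v i /andP[au ut] /andP[av vt].
  have loa : lo m k <= Num.max 0 (lo m k) by rewrite le_max lexx orbT.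
  have a0 : 0 <= Num.max 0 (lo m k) by rewrite le_max lexx.
  have tT := tk_le km.
  have elo : tk m k - lo m k = 2 * h by rewrite /lo -/h opprB addrC subrK.
  have cl x : Num.max 0 (lo m k) <= x -> x <= tk m k ->
      `|S x w i - S (tau w) w i| < c / 4.
    move=> ax xt; apply: Hk.
      by rewrite (le_trans a0 ax) (le_trans xt tT).
    rewrite ltr_norml; apply/andP; split; lra.
  have e1 := cl u au ut; have e2 := cl v av vt.
  have -> : S u w i - S v w i = (S u w i - S (tau w) w i) - (S v w i - S (tau w) w i).
    by rewrite opprB addrA subrK.
  rewrite -/c; apply: le_trans (ler_normB _ _) _; clearbody c; lra.
apply: negligibleS hA => w /= /not_implyP [ew Yw]; split => //.
by rewrite leNgt; apply/negP.
Qed.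
End Main.

Theorem lemma1 (dsp : measure_display) (Omega : measurableType dsp) (R : realType)
  (P : probability Omega R) (T : R) (F : R -> set (set Omega))
  (d : nat) (S : R -> Omega -> 'I_d -> R) :
  0 < T ->
  complete_space P ->
  is_filtration T F ->
  usual_conditions P T F ->
  (forall t i, 0 <= t <= T -> Gmeasurable (F t) (fun w => S t w i)) ->
  (forall w i, {within `[0, T], continuous (fun t => S t w i)}) ->
  (forall t w i, 0 <= t <= T -> 0 < S t w i) ->
  sticky P T F S ->
  forall (tau : Omega -> R) (eta : Omega -> R),
    stopping_time T F tau ->
    Gmeasurable (F_at T F tau) eta ->
    (forall w, 0 <= eta w) ->
    forall Y, cond_prob_version P (F_at T F tau) [set w | Sstar T S tau w < eta w] Y ->
    {ae P, forall w, 0 < eta w -> 0 < Y w}.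
Proof.
move=> hT _ hF _ hS hC _ hst tau eta htau heta eta0 Y hY.
exact: (@main_lemma dsp Omega R P T F d S hT hF hS hC hst tau eta htau heta eta0 Y hY).
Qed.
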